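(* Let $A\in\mathbb{R}^{n\times n}$ be symmetric, $\beta>0$, $f(\mathbf{z})=\frac12\mathbf{z}^TA\mathbf{z}+\frac{\beta}{2}\sum_kz_k^4$ on $\mathbb{S}^{n-1}$, and let $\mathbf{z}\in\mathbb{S}^{n-1}$ be a stationary point, i.e. $[A+2\beta\,\mathrm{diag}(z_1^2,\dots,z_n^2)]\mathbf{z}=2\lambda\mathbf{z}$ with $2\lambda=\mathbf{z}^TA\mathbf{z}+2\beta\|\mathbf{z}\|_4^4$, such that $H=A+2\beta\,\mathrm{diag}(z_1^2,\dots,z_n^2)-2\lambda I$ is positive semidefinite. Then the KL exponent at $\mathbf{z}$ is at least $\frac14$: there exist $\delta,\eta>0$ such that $|f(\mathbf{y})-f(\mathbf{z})|^{3/4}\le\eta\|\mathrm{grad} f(\mathbf{y})\|$ for all $\mathbf{y}\in\mathbb{S}^{n-1}$ with $\|\mathbf{y}-\mathbf{z}\|<\delta$.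
   Context: $\mathbb{S}^{n-1}$ is the unit sphere in $\mathbb{R}^n$. For $\mathbf{y}\in\mathbb{S}^{n-1}$, $\mathrm{grad} f(\mathbf{y})=(I-\mathbf{y}\mathbf{y}^T)[A\mathbf{y}+2\beta\,\mathrm{diag}(y_1^2,\dots,y_n^2)\mathbf{y}]$ is the Riemannian gradient. *)

(* Defs.v *)
From HB Require Import structures.
From mathcomp Require Import all_boot all_order all_algebra.
From mathcomp Require Import all_classical all_reals exp.
Set Implicit Arguments. Unset Strict Implicit. Unset Printing Implicit Defensive.
Import Order.TTheory GRing.Theory Num.Theory.
Local Open Scope ring_scope.

Section Defs.
Variables (R : realType) (n : nat).

Definition sqnorm (v : 'cV[R]_n) : R := \sum_(i < n) (v i 0) ^+ 2.
Definition norm2 (v : 'cV[R]_n) : R := Num.sqrt (sqnorm v).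

Definition norm4_4 (v : 'cV[R]_n) : R := \sum_(i < n) (v i 0) ^+ 4.

Definition on_sphere (v : 'cV[R]_n) : Prop := sqnorm v = 1.

Definition qform (M : 'M[R]_n) (z : 'cV[R]_n) : R := (z^T *m M *m z) 0 0.

Definition diagsq (z : 'cV[R]_n) : 'M[R]_n := diag_mx (\row_k ((z k 0) ^+ 2)).

Definition fobj (A : 'M[R]_n) (beta : R) (z : 'cV[R]_n) : R :=
  qform A z / 2 + beta / 2 * norm4_4 z.

Definition rgrad (A : 'M[R]_n) (beta : R) (y : 'cV[R]_n) : 'cV[R]_n :=
  (1%:M - y *m y^T) *m (A *m y + (2 * beta) *: (diagsq y *m y)).

Definition psd (M : 'M[R]_n) : Prop := forall x : 'cV[R]_n, 0 <= qform M x.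

End Defs.

(* Main.v *)
Require Import Defs.
From HB Require Import structures.
From mathcomp Require Import all_boot all_order all_algebra.
From mathcomp Require Import all_classical all_reals exp.
From mathcomp Require Import ring lra.
Import Order.TTheory GRing.Theory Num.Theory.
Local Open Scope ring_scope.
Set Implicit Arguments. Unset Strict Implicit. Unset Printing Implicit Defensive.

Section Dot.
Variables (R : realType) (n : nat).
Implicit Types (a b c v w : 'cV[R]_n) (M : 'M[R]_n).

Definition dot a b : R := \sum_(i < n) a i 0 * b i 0.

Lemma dotC a b : dot a b = dot b a.
Proof. by apply: eq_bigr => i _; rewrite mulrC. Qed.
Lemma dotDl a b c : dot (a + b) c = dot a c + dot b c.
Proof. by rewrite /dot -big_split; apply: eq_bigr => i _; rewrite !mxE mulrDl. Qed.
Lemma dotDr a b c : dot c (a + b) = dot c a + dot c b.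
Proof. by rewrite dotC dotDl !(dotC c). Qed.
Lemma dotZl (k : R) a b : dot (k *: a) b = k * dot a b.
Proof. by rewrite /dot mulr_sumr; apply: eq_bigr => i _; rewrite !mxE mulrA. Qed.
Lemma dotZr (k : R) a b : dot a (k *: b) = k * dot a b.
Proof. by rewrite dotC dotZl dotC. Qed.
Lemma dotNl a b : dot (- a) b = - dot a b.
Proof. by rewrite -scaleN1r dotZl mulN1r. Qed.
Lemma dotNr a b : dot a (- b) = - dot a b.
Proof. by rewrite dotC dotNl dotC. Qed.
Lemma dotBl a b c : dot (a - b) c = dot a c - dot b c.
Proof. by rewrite dotDl dotNl. Qed.
Lemma dotBr a b c : dot c (a - b) = dot c a - dot c b.
Proof. by rewrite dotDr dotNr. Qed.
Lemma dot0l a : dot 0 a = 0.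
Proof. by rewrite /dot big1 // => i _; rewrite mxE mul0r. Qed.
Lemma dot0r a : dot a 0 = 0.
Proof. by rewrite dotC dot0l. Qed.

Lemma sqnormE v : sqnorm v = dot v v.
Proof. by apply: eq_bigr => i _; rewrite expr2. Qed.
Lemma sqnorm_ge0 v : 0 <= sqnorm v.
Proof. by apply: sumr_ge0 => i _; apply: sqr_ge0. Qed.
Lemma coord_le_sqnorm v i : v i 0 ^+ 2 <= sqnorm v.
Proof.
rewrite /sqnorm (bigD1 i) //= lerDl; apply: sumr_ge0 => j _; exact: sqr_ge0.
Qed.
Lemma sqnorm0P v : sqnorm v = 0 -> forall i, v i 0 = 0.
Proof.
move=> h i; have := @psumr_eq0P _ _ xpredT (fun j => v j 0 ^+ 2) (fun j _ => sqr_ge0 (v j 0)) h i isT.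
by move/eqP; rewrite sqrf_eq0 => /eqP.
Qed.

Lemma dot_mul a M b : dot a (M *m b) = dot (M^T *m a) b.
Proof.
rewrite /dot.
under eq_bigr => i _ do rewrite mxE big_distrr /=.
rewrite exchange_big /=; apply: eq_bigr => j _.
rewrite mxE big_distrl /=; apply: eq_bigr => i _; rewrite !mxE; ring.
Qed.

Lemma qformE M v : qform M v = dot v (M *m v).
Proof.
rewrite dot_mul /qform /dot mxE; apply: eq_bigr => i _; rewrite !mxE; congr (_ * _); apply: eq_bigr => j _; by rewrite !mxE mulrC.
Qed.

Lemma cauchy_schwarz a b : dot a b ^+ 2 <= sqnorm a * sqnorm b.
Proof.
have hB := sqnorm_ge0 b.
have [B0|Bpos] := eqVneq (sqnorm b) 0.
  have -> : dot a b = 0.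
    by rewrite /dot big1 // => i _; rewrite (sqnorm0P B0) mulr0.
  by rewrite B0 mulr0 expr0n.
have Bgt : 0 < sqnorm b by rewrite lt_def Bpos hB.
set B := sqnorm b; set c := dot a b.
have h := sqnorm_ge0 (B *: a - c *: b).
rewrite sqnormE !(dotBl, dotBr, dotZl, dotZr) -!sqnormE -/B (dotC b a) -/c in h.
have e : B * (B * sqnorm a - c * c) - c * (B * c - c * B) = B * (sqnorm a * B - c ^+ 2) by ring.
by move: h; rewrite e pmulr_rge0 // subr_ge0.
Qed.

Lemma abs_coord_le v i : `|v i 0| * `|v i 0| <= sqnorm v.
Proof. by rewrite -normrM -expr2 ger0_norm ?sqr_ge0 // coord_le_sqnorm. Qed.

Lemma prod_le_sqnorm v i j : `|v i 0| * `|v j 0| <= sqnorm v.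
Proof.
have h1 := coord_le_sqnorm v i; have h2 := coord_le_sqnorm v j.
have : `|v i 0| * `|v j 0| <= (v i 0 ^+ 2 + v j 0 ^+ 2) / 2.
  rewrite -[v i 0 ^+ 2]real_normK ?num_real // -[v j 0 ^+ 2]real_normK ?num_real //.
  set p := `|v i 0|; set q := `|v j 0|.
  have := sqr_ge0 (p - q); nra.
move/le_trans; apply; lra.
Qed.

Lemma quad_bound M : exists c : R, 0 <= c /\ forall v, `|dot v (M *m v)| <= c * sqnorm v.
Proof.
exists (\sum_(i < n) \sum_(j < n) `|M i j|); split.
  by apply: sumr_ge0 => i _; apply: sumr_ge0 => j _.
move=> v; rewrite /dot mulr_suml; apply: (le_trans (ler_norm_sum _ _ _)).
apply: ler_sum => i _; rewrite mxE big_distrr mulr_suml /=.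
apply: (le_trans (ler_norm_sum _ _ _)); apply: ler_sum => j _.
rewrite !normrM mulrCA; apply: ler_wpM2l => //; exact: prod_le_sqnorm.
Qed.

End Dot.

Section Gap.
Variables (R : realType) (n : nat).
Implicit Types (a b c v w : 'cV[R]_n) (M Q : 'M[R]_n).

Lemma quad_expand M a b (p q : R) : M^T = M ->
  dot (p *: a + q *: b) (M *m (p *: a + q *: b)) =
  p ^+ 2 * dot a (M *m a) + 2 * p * q * dot a (M *m b) + q ^+ 2 * dot b (M *m b).
Proof.
move=> sM.
have hba : dot b (M *m a) = dot a (M *m b) by rewrite dot_mul sM dotC.
rewrite !mulmxDr -!scalemxAr !(dotDl, dotDr, dotZl, dotZr) hba; ring.
Qed.

Lemma psd_cs M a b : M^T = M -> (forall v, 0 <= dot v (M *m v)) ->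
  dot a (M *m b) ^+ 2 <= dot a (M *m a) * dot b (M *m b).
Proof.
move=> sM pM.
set al := dot a (M *m a); set be := dot b (M *m b); set ga := dot a (M *m b).
have ha : 0 <= al by exact: pM. have hb : 0 <= be by exact: pM.
have [bz|bnz] := eqVneq be 0.
  have [az|anz] := eqVneq al 0.
    have := pM (1 *: a + (- ga) *: b); rewrite quad_expand // -/al -/be -/ga.
    clearbody al be ga; subst al be; move=> h; rewrite mulr0; nra.
  have agt : 0 < al by rewrite lt_def anz ha.
  have := pM ((- ga) *: a + al *: b); rewrite quad_expand // -/al -/be -/ga.
  move=> h.
  have : 0 <= al * (al * be - ga ^+ 2) by move: h; rewrite (_ : _ + _ = al * (al * be - ga ^+ 2)) //; ring.
  by rewrite pmulr_rge0 // subr_ge0.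
have bgt : 0 < be by rewrite lt_def bnz hb.
have := pM (be *: a + (- ga) *: b); rewrite quad_expand // -/al -/be -/ga.
move=> h.
have : 0 <= be * (al * be - ga ^+ 2) by move: h; rewrite (_ : _ + _ = be * (al * be - ga ^+ 2)) //; ring.
by rewrite pmulr_rge0 // subr_ge0.
Qed.

Lemma rank_sym_sq (Q : 'M[R]_n) : Q^T = Q -> (Q <= Q *m Q)%MS.
Proof.
move=> sQ.
have h := mxrank_leqif_sup (submxMl Q Q).
rewrite -h.2.
have hk : (Q :&: kermx Q)%MS == 0.
  apply/rowV0P => v; rewrite sub_capmx => /andP[/submxP[w ->] hv].
  move: hv; rewrite sub_kermx => /eqP hv.
  have e : (w *m Q) *m (w *m Q)^T = 0.
    by rewrite trmx_mul sQ mulmxA hv mul0mx.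
  have e0 : (w *m Q *m (w *m Q)^T) 0 0 = 0 by rewrite e mxE.
  move: e0; rewrite mxE /= => e0.
  have h2 := @psumr_eq0P _ _ xpredT (fun k => (w *m Q) 0 k ^+ 2) (fun k _ => sqr_ge0 _).
  have h3 : forall k, (w *m Q) 0 k ^+ 2 = 0.
    move=> k; apply: h2 => //; rewrite -[RHS]e0; apply: eq_bigr => l _.
    by rewrite expr2 [(w *m Q)^T l 0]mxE.
  apply/matrixP => i j; rewrite (ord1 i) [in RHS]mxE.
  by apply/eqP; rewrite -sqrf_eq0; apply/eqP; apply: h3.
have := mxrank_mul_ker Q Q; move: hk; rewrite -mxrank_eq0 => /eqP ->.
by rewrite addn0 => ->.
Qed.

Lemma gap Q : Q^T = Q -> (forall v, 0 <= dot v (Q *m v)) ->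
  exists C : R, 0 < C /\ forall d, exists k, Q *m k = 0 /\
     sqnorm (d - k) <= C * dot d (Q *m d).
Proof.
move=> sQ pQ.
set P := Q *m Q.
set B := Q *m (pinvmx P)^T.
have [cB [cB0 hcB]] := quad_bound (B^T *m B).
have [cQ [cQ0 hcQ]] := quad_bound Q.
exists (cB * cQ + 1); split; first by apply: ltr_wpDl => //; exact: mulr_ge0.
move=> d.
set v := (Q *m d)^T.
have vP : (v <= P)%MS.
  apply: submx_trans (rank_sym_sq sQ).
  by rewrite /v trmx_mul sQ submxMl.
set w := v *m pinvmx P.
set r := (w *m Q)^T.
exists (d - r); split.
  rewrite mulmxBr.
  have -> : Q *m r = Q *m d.
    rewrite /r trmx_mul (_ : Q^T = Q) // mulmxA.
    have -> : Q *m Q *m w^T = (w *m P)^T by rewrite [RHS]trmx_mul /P [(Q *m Q)^T]trmx_mul sQ.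
    by rewrite /w mulmxKpV // /v trmxK.
  by rewrite subrr.
have -> : d - (d - r) = r by rewrite opprB addrC subrK.
set e := Q *m d.
have re : r = B *m e.
  by rewrite /r /w trmx_mul sQ /v trmx_mul trmxK /B mulmxA.
have q0 : 0 <= dot d (Q *m d) by exact: pQ.
have hr : sqnorm r <= cB * sqnorm e.
  rewrite sqnormE re dot_mul dotC mulmxA.
  by apply: le_trans (ler_norm _) _; apply: hcB.
have he : sqnorm e <= cQ * dot d (Q *m d).
  have cs := psd_cs e d sQ pQ.
  have ee : dot e (Q *m d) = sqnorm e by rewrite sqnormE.
  rewrite ee in cs.
  have hq : dot e (Q *m e) <= cQ * sqnorm e by apply: le_trans (ler_norm _) _; apply: hcQ.
  have se0 := sqnorm_ge0 e.
  have [ez|enz] := eqVneq (sqnorm e) 0; first by rewrite ez; exact: mulr_ge0.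
  have egt : 0 < sqnorm e by rewrite lt_def enz se0.
  have : sqnorm e * sqnorm e <= sqnorm e * (cQ * dot d (Q *m d)).
    rewrite -expr2; apply: le_trans cs _; rewrite mulrA (mulrC _ cQ).
    by apply: ler_wpM2r.
  by rewrite ler_pM2l.
apply: le_trans hr _.
apply: le_trans (_ : cB * (cQ * dot d (Q *m d)) <= _).
  by apply: ler_wpM2l.
rewrite mulrA ler_wpM2r //; lra.
Qed.

End Gap.

Section Ident.
Variables (R : realType) (n : nat).
Implicit Types (a b c v w y z : 'cV[R]_n) (M H : 'M[R]_n).

Lemma dot_diag a b (r : 'rV[R]_n) :
  dot a (diag_mx r *m b) = \sum_i a i 0 * r 0 i * b i 0.
Proof. by rewrite mul_diag_mx; apply: eq_bigr => i _; rewrite mxE mulrA. Qed.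

Lemma dot_diagsq a b z :
  dot a (diagsq z *m b) = \sum_i z i 0 ^+ 2 * a i 0 * b i 0.
Proof. rewrite dot_diag; apply: eq_bigr => i _; rewrite mxE; ring. Qed.

Lemma dot_scalar a b (c : R) : dot a (c%:M *m b) = c * dot a b.
Proof. by rewrite mul_scalar_mx dotZr. Qed.

Lemma proj_apply y v : (1%:M - y *m y^T) *m v = v - (dot y v) *: y.
Proof.
rewrite mulmxBl mul1mx -mulmxA; congr (_ - _).
apply/matrixP => i j; rewrite (ord1 j) !mxE big_ord1 !mxE mulrC; congr (_ * _).
by apply: eq_bigr => k _; rewrite !mxE.
Qed.

Lemma sum_u0 y z : on_sphere y -> on_sphere z ->
  \sum_i (y i 0 ^+ 2 - z i 0 ^+ 2) = 0.
Proof. by move=> hy hz; rewrite sumrB; move: hy hz; rewrite /on_sphere /sqnorm => -> ->; rewrite subrr. Qed.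

Lemma dot_sym_ker H a b : H^T = H -> H *m a = 0 -> dot a (H *m b) = 0.
Proof. by move=> sH ha; rewrite dot_mul sH ha dot0l. Qed.

Lemma qform_shift H y z : H^T = H -> H *m z = 0 ->
  dot y (H *m y) = dot (y - z) (H *m (y - z)).
Proof.
move=> sH hz.
set d := y - z.
have -> : y = d + z by rewrite /d subrK.
by rewrite mulmxDr hz addr0 dotDl (dot_sym_ker _ sH hz) addr0.
Qed.

End Ident.

Section Main1.
Variables (R : realType) (n : nat).
Implicit Types (a b c v w y z : 'cV[R]_n) (M H A : 'M[R]_n).

Lemma qformA_expand A H (beta lam : R) z v :
  H = A + (2 * beta) *: diagsq z - (2 * lam)%:M ->
  qform A v = dot v (H *m v) - 2 * beta * \sum_i z i 0 ^+ 2 * v i 0 ^+ 2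
              + 2 * lam * sqnorm v.
Proof.
move=> hH.
have eA : A = H - (2 * beta) *: diagsq z + (2 * lam)%:M.
  by rewrite hH (addrAC (A + _)) addrK subrK.
rewrite qformE {1}eA !mulmxDl mulNmx -scalemxAl !(dotDr, dotNr, dotZr).
rewrite dot_diagsq dot_scalar sqnormE; congr (_ - _ * _ + _).
by apply: eq_bigr => i _; rewrite expr2 mulrA.
Qed.

Lemma fobj_diff A H (beta lam : R) y z :
  H = A + (2 * beta) *: diagsq z - (2 * lam)%:M -> H^T = H -> H *m z = 0 ->
  on_sphere y -> on_sphere z ->
  fobj A beta y - fobj A beta z =
  dot (y - z) (H *m (y - z)) / 2 + beta / 2 * \sum_i (y i 0 ^+ 2 - z i 0 ^+ 2) ^+ 2.
Proof.
move=> hH sH hz sy sz.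
rewrite /fobj !(qformA_expand _ hH) (qform_shift _ sH hz) hz dot0r.
move: sy sz; rewrite /on_sphere => -> ->.
rewrite /norm4_4.
have -> : \sum_i (y i 0 ^+ 2 - z i 0 ^+ 2) ^+ 2 =
   \sum_i y i 0 ^+ 4 - 2 * \sum_i z i 0 ^+ 2 * y i 0 ^+ 2 + \sum_i z i 0 ^+ 4.
  rewrite mulr_sumr -sumrB -big_split /=; apply: eq_bigr => i _; ring.
have -> : \sum_i z i 0 ^+ 2 * z i 0 ^+ 2 = \sum_i z i 0 ^+ 4.
  by apply: eq_bigr => i _; rewrite -exprD.
ring.
Qed.

Lemma rgrad_eq A H (beta lam : R) y z :
  H = A + (2 * beta) *: diagsq z - (2 * lam)%:M -> H *m z = 0 ->
  on_sphere y ->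
  let g := H *m (y - z) + (2 * beta) *: (\col_i (y i 0 * (y i 0 ^+ 2 - z i 0 ^+ 2))) in
  rgrad A beta y = g - (dot y g) *: y.
Proof.
move=> hH hz sy g.
have eA : A = H - (2 * beta) *: diagsq z + (2 * lam)%:M.
  by rewrite hH (addrAC (A + _)) addrK subrK.
have e1 : A *m y + (2 * beta) *: (diagsq y *m y) = g + (2 * lam) *: y.
  rewrite /g eA !mulmxDl mulNmx -scalemxAl mul_scalar_mx.
  have -> : H *m y = H *m (y - z) by rewrite mulmxBr hz subr0.
  rewrite /diagsq !mul_diag_mx.
  apply/matrixP => i j; rewrite (ord1 j) !mxE.
  ring.
rewrite /rgrad e1 proj_apply dotDr dotZr -sqnormE.
move: sy; rewrite /on_sphere => ->.
rewrite mulr1 scalerDl opprD addrACA subrr addr0 //.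
Qed.

End Main1.

Section Key.
Variables (R : realType) (n : nat).
Implicit Types (a b c v w y z k : 'cV[R]_n) (M H A : 'M[R]_n).

Lemma key_ident H (beta : R) y z k :
  H^T = H -> H *m z = 0 -> H *m k = 0 -> (forall i, z i 0 != 0 -> k i 0 = 0) ->
  on_sphere y -> on_sphere z ->
  let g := H *m (y - z) + (2 * beta) *: (\col_i (y i 0 * (y i 0 ^+ 2 - z i 0 ^+ 2))) in
  let D := dot (y - z) (H *m (y - z)) in
  let a := \sum_i (y i 0 - z i 0) * (y i 0 - z i 0 - k i 0) in
  let U := \sum_i (y i 0 ^+ 2 - z i 0 ^+ 2) ^+ 2 in
  let s := \sum_i z i 0 ^+ 2 * (y i 0 ^+ 2 - z i 0 ^+ 2) in
  let e := \sum_i ((y i 0 - z i 0) ^+ 2 * (y i 0 ^+ 2 - z i 0 ^+ 2)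
                    - k i 0 * y i 0 * (y i 0 ^+ 2 - z i 0 ^+ 2)) in
  dot ((y - z) - (1/2) *: k) (g - (dot y g) *: y) =
  D * (1 - a / 2) + beta * U * (1 - a) + beta * e - beta * s * a.
Proof.
move=> sH hz hk hkz sy sz g D a U s e.
set w := \col_i (y i 0 * (y i 0 ^+ 2 - z i 0 ^+ 2)).
have kz : forall i, k i 0 * z i 0 = 0.
  by move=> i; have [->|/hkz->] := eqVneq (z i 0) 0; rewrite ?mulr0 ?mul0r.
have t1 : dot y g = D + 2 * beta * (U + s).
  rewrite /g dotDr dotZr.
  have -> : dot y (H *m (y - z)) = D.
    have -> : y = (y - z) + z by rewrite subrK.
    by rewrite dotDl (dot_sym_ker _ sH hz) addr0 -/D addrK.
  congr (_ + _ * _); rewrite /U /s -big_split /=; apply: eq_bigr => i _.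
  rewrite mxE; ring.
have t2 : dot ((y - z) - (1/2) *: k) y = a / 2.
  have h0 := sum_u0 sy sz.
  rewrite /a /dot.
  have -> : \sum_i ((y - z) - (1/2) *: k) i 0 * y i 0 =
            \sum_i ((y i 0 - z i 0) * (y i 0 - z i 0 - k i 0) / 2
                     + (y i 0 ^+ 2 - z i 0 ^+ 2) / 2 - k i 0 * z i 0 / 2).
    by apply: eq_bigr => i _; rewrite !mxE; field.
  rewrite !big_split /= -!mulr_suml h0.
  rewrite [X in _ + X]big1; last by move=> i _; rewrite kz mul0r oppr0.
  by rewrite mul0r !addr0.
have t3 : dot ((y - z) - (1/2) *: k) g = D + beta * (U + e).
  rewrite /g dotDr dotBl dotZl dotZr.
  have -> : dot k (H *m (y - z)) = 0 by apply: dot_sym_ker.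
  rewrite mulr0 subr0 -/D; congr (_ + _).
  rewrite /U /e -big_split /= /dot !mulr_sumr; apply: eq_bigr => i _.
  by rewrite !mxE; field.
by rewrite dotBr dotZr t1 t2 t3; field.
Qed.

End Key.

Section S.
Variable R : realType.
Lemma u_le (y z : R) : y ^+ 2 <= 1 -> z ^+ 2 <= 1 -> (y ^+ 2 - z ^+ 2) ^+ 2 <= 4 * (y - z) ^+ 2.
Proof.
move=> hy hz.
have e : (y ^+ 2 - z ^+ 2) ^+ 2 = (y - z) ^+ 2 * (y + z) ^+ 2 by ring.
rewrite e [in leRHS]mulrC; apply: ler_wpM2l; first exact: sqr_ge0.
have := sqr_ge0 (y - z); nra.
Qed.
Lemma ind_le (y z m : R) : 0 < m -> m ^+ 2 <= z ^+ 2 -> (y - z) ^+ 2 <= m ^+ 2 ->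
  m ^+ 2 * (y - z) ^+ 2 <= (y ^+ 2 - z ^+ 2) ^+ 2.
Proof.
move=> hm hz hd.
have e : (y ^+ 2 - z ^+ 2) ^+ 2 = (y - z) ^+ 2 * (y + z) ^+ 2 by ring.
rewrite e [in leLHS]mulrC; apply: ler_wpM2l; first exact: sqr_ge0.
set d := y - z.
have -> : y + z = 2 * z + d by rewrite /d; ring.
have [zp|zn] := lerP 0 z.
  have hz' : m <= z by rewrite -(ler_pXn2r (n:=2)) // ?nnegrE; lra.
  have hd' : - m <= d by rewrite leNgt; apply/negP => h; move: hd; rewrite -/d; nra.
  nra.
have hz' : z <= - m.
  have : m <= - z by rewrite -(ler_pXn2r (n:=2)) // ?nnegrE ?sqrrN; lra.
  lra.
have hd' : d <= m by rewrite leNgt; apply/negP => h; move: hd; rewrite -/d; nra.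
nra.
Qed.
End S.
Section SS2.
Variable R : realType.
Lemma aux1 (a b dl : R) : 0 <= a -> 0 <= b -> a <= dl -> a ^+ 3 * b <= dl * ((a ^+ 4 + b ^+ 2) / 2).
Proof.
move=> ha hb hd.
have h0 : 0 <= a ^+ 2 * b by apply: mulr_ge0 => //; exact: sqr_ge0.
have h1 : 0 <= (dl - a) * (a ^+ 2 * b) by apply: mulr_ge0 => //; lra.
have h2 := sqr_ge0 (a ^+ 2 - b).
have h3 : 0 <= dl by lra.
have h4 : 0 <= dl * (a ^+ 2 - b) ^+ 2 by apply: mulr_ge0.
nra.
Qed.
Lemma e_bound (y z k m dl : R) : 0 < m -> 0 <= dl -> `|y - z| <= dl ->
  (z != 0 -> k = 0 /\ m ^+ 2 * (y - z) ^+ 2 <= (y ^+ 2 - z ^+ 2) ^+ 2) ->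
  `|(y - z) ^+ 2 * (y ^+ 2 - z ^+ 2) - k * y * (y ^+ 2 - z ^+ 2)| <=
  dl * ((y ^+ 2 - z ^+ 2) ^+ 2 / m + (y ^+ 2 - z ^+ 2) ^+ 2 + (y - z - k) ^+ 2).
Proof.
move=> hm hdl hd hz.
have hm1 : 0 <= (y ^+ 2 - z ^+ 2) ^+ 2 / m by apply: divr_ge0 => //; [exact: sqr_ge0 | exact: ltW].
have [z0|znz] := eqVneq z 0.
  rewrite z0 in hd hm1 *.
  have -> : (y - 0) ^+ 2 * (y ^+ 2 - 0 ^+ 2) - k * y * (y ^+ 2 - 0 ^+ 2) = y ^+ 3 * (y - 0 - k) by ring.
  have -> : (y ^+ 2 - 0 ^+ 2) ^+ 2 = y ^+ 4 by ring.
  rewrite subr0 in hd *; rewrite normrM normrX.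
  have e1 : y ^+ 4 = `|y| ^+ 4 by rewrite (_ : 4 = 2 * 2)%N // !exprM real_normK // num_real.
  have e2 : (y - k) ^+ 2 = `|y - k| ^+ 2 by rewrite real_normK // num_real.
  rewrite e1 e2.
  have hm2 : 0 <= `|y| ^+ 4 / m by apply: divr_ge0; [exact: exprn_ge0 | exact: ltW].
  have h := @aux1 `|y| `|y - k| dl (normr_ge0 y) (normr_ge0 _) hd.
  apply: le_trans h _.
  apply: ler_wpM2l => //.
  have := sqr_ge0 `|y - k|; have := exprn_ge0 4 (normr_ge0 y); lra.
have [-> hmu] := hz znz.
rewrite mul0r mul0r subr0 normrM.
set a := `|y - z|; set u := y ^+ 2 - z ^+ 2.
have ha : 0 <= a by rewrite /a normr_ge0.
have hau : m * a <= `|u|.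
  have h0 : 0 <= m * a by apply: mulr_ge0 => //; exact: ltW.
  rewrite -(ler_pXn2r (n:=2)) ?nnegrE //.
  by rewrite exprMn /a !real_normK ?num_real.
have h1 : a * `|u| <= u ^+ 2 / m.
  rewrite ler_pdivlMr // -(real_normK (num_real u)) mulrC mulrA expr2; apply: ler_wpM2r => //.
rewrite normrX -/a expr2 -mulrA.
apply: le_trans (_ : a * (u ^+ 2 / m) <= _); first by apply: ler_wpM2l.
apply: le_trans (_ : dl * (u ^+ 2 / m) <= _); first by apply: ler_wpM2r => //.
apply: ler_wpM2l => //; rewrite -addrA lerDl; apply: addr_ge0; exact: sqr_ge0.
Qed.
End SS2.

Section S4.
Variable R : realType.
Lemma arithA (D U R2 a s e beta dl Cg m : R) :
  0 <= D -> 0 <= U -> 0 <= R2 -> 0 < beta -> 0 < dl -> 0 < m -> 0 < Cg ->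
  `|a| <= 1/2 ->
  `|e| <= dl * (U / m + U + R2) ->
  `|s * a| <= dl * (U + R2) / 2 ->
  R2 <= Cg * (D + U / m ^+ 2) ->
  dl * (1 / m + 3 / 2 + 3 * Cg / (2 * m ^+ 2)) <= 1 / 4 ->
  dl * (3 / 2 * beta * Cg) <= 1 / 4 ->
  (D + beta * U) / 4 <= D * (1 - a / 2) + beta * U * (1 - a) + beta * e - beta * s * a.
Proof.
move=> hD hU hR hb hdl hm hC ha he hsa hR2 hk1 hk2.
have [ha1 ha2] : -(1/2) <= a /\ a <= 1/2 by move: ha; rewrite ler_norml => /andP[].
have h1 : 3 * D / 4 <= D * (1 - a / 2) by nra.
have h2 : beta * U / 2 <= beta * U * (1 - a).
  have : 0 <= beta * U by apply: mulr_ge0 => //; exact: ltW.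
  nra.
have h3 : - (beta * (dl * (U / m + U + R2))) <= beta * e.
  have : - `|e| <= e by rewrite lerNnormlW.
  have hb' : 0 <= beta by exact: ltW.
  move=> h; rewrite -mulrN; apply: ler_wpM2l => //; lra.
have h4 : beta * s * a <= beta * (dl * (U + R2) / 2).
  rewrite -mulrA; apply: ler_wpM2l; first exact: ltW.
  exact: le_trans (ler_norm _) hsa.
have h5 : beta * dl * R2 <= beta * dl * (Cg * (D + U / m ^+ 2)).
  apply: ler_wpM2l => //; apply: mulr_ge0; exact: ltW.
have h6 : beta * U * (dl * (1 / m + 3 / 2 + 3 * Cg / (2 * m ^+ 2))) <= beta * U * (1/4).
  apply: ler_wpM2l => //; apply: mulr_ge0 => //; exact: ltW.
have h7 : D * (dl * (3 / 2 * beta * Cg)) <= D * (1/4) by apply: ler_wpM2l.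
have e1 : (U / m) = U * (1 / m) by rewrite mul1r.
have e2 : (U / m ^+ 2) = U * (1 / m ^+ 2) by rewrite mul1r.
have e3 : 3 * Cg / (2 * m ^+ 2) = 3 / 2 * Cg * (1 / m ^+ 2).
  by rewrite !mul1r invfM; ring.
rewrite e1 in h3; rewrite e2 in h5; rewrite e3 in h6.
nra.
Qed.
End S4.

Section S5.
Variable R : realType.
Lemma arithB (D U R2 Sd X SA beta w cH Cg N : R) :
  0 <= D -> 0 <= U -> 0 <= R2 -> 0 <= Sd -> 0 <= X -> 0 < beta -> 0 < w ->
  0 <= cH -> 0 < Cg -> 0 <= SA -> 0 <= N ->
  X <= (Sd + R2) / 2 -> Sd <= U * w + SA -> SA ^+ 2 <= N * U -> U <= 4 ->
  R2 <= Cg * (D + U * w) -> D <= cH ->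
  X ^+ 2 <= (4 * w ^+ 2 + N + 4 * Cg ^+ 2 * w ^+ 2 + Cg ^+ 2 * cH) * (1 + 1 / beta)
            * (D + beta * U).
Proof.
move=> hD hU hR hS hX hb hw hcH hC hSA hN hX2 hSd hSA2 hU4 hR2 hDc.
have s1 : X ^+ 2 <= (Sd ^+ 2 + R2 ^+ 2) / 2.
  have : X ^+ 2 <= ((Sd + R2) / 2) ^+ 2 by rewrite lerXn2r // nnegrE; lra.
  have := sqr_ge0 (Sd - R2); nra.
have s2 : Sd ^+ 2 <= 2 * (U * w) ^+ 2 + 2 * SA ^+ 2.
  have : Sd ^+ 2 <= (U * w + SA) ^+ 2 by rewrite lerXn2r // nnegrE; apply: addr_ge0 => //; apply: mulr_ge0 => //; exact: ltW.
  have := sqr_ge0 (U * w - SA); nra.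
have s3 : U ^+ 2 <= 4 * U by nra.
have s4 : R2 ^+ 2 <= 2 * Cg ^+ 2 * (D ^+ 2 + (U * w) ^+ 2).
  have h0 : 0 <= U * w by apply: mulr_ge0 => //; exact: ltW.
  have : R2 ^+ 2 <= (Cg * (D + U * w)) ^+ 2 by rewrite lerXn2r // nnegrE; apply: mulr_ge0; [exact: ltW| lra].
  have := sqr_ge0 (D - U * w); have := sqr_ge0 Cg; nra.
have s5 : D ^+ 2 <= cH * D by nra.
have w2 : 0 <= w ^+ 2 by exact: sqr_ge0.
have s6 : (U * w) ^+ 2 <= 4 * U * w ^+ 2 by rewrite exprMn; apply: ler_wpM2r.
have s7 : X ^+ 2 <= (4 * w ^+ 2 + N + 4 * Cg ^+ 2 * w ^+ 2) * U + Cg ^+ 2 * cH * D.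
  have hc2 : 0 <= Cg ^+ 2 by exact: sqr_ge0.
  have s8 : Cg ^+ 2 * (D ^+ 2 + (U * w) ^+ 2) <= Cg ^+ 2 * (cH * D + 4 * U * w ^+ 2).
    by apply: ler_wpM2l => //; lra.
  nra.
have K0 : 0 <= 4 * w ^+ 2 + N + 4 * Cg ^+ 2 * w ^+ 2 + Cg ^+ 2 * cH.
  by have := sqr_ge0 Cg; have := mulr_ge0 (sqr_ge0 Cg) hcH; nra.
have s9 : D + U <= (1 + 1 / beta) * (D + beta * U).
  have hib : 0 < 1 / beta by rewrite divr_gt0.
  have : 1 / beta * beta = 1 by rewrite mul1r mulVf // gt_eqF.
  have : 0 <= 1 / beta * D by apply: mulr_ge0 => //; exact: ltW.
  nra.
apply: le_trans s7 _.
have s10 : (4 * w ^+ 2 + N + 4 * Cg ^+ 2 * w ^+ 2 + Cg ^+ 2 * cH) * (D + U) <= (4 * w ^+ 2 + N + 4 * Cg ^+ 2 * w ^+ 2 + Cg ^+ 2 * cH) * (1 + 1 / beta) * (D + beta * U).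
  set K := (4 * w ^+ 2 + N + 4 * Cg ^+ 2 * w ^+ 2 + Cg ^+ 2 * cH).
  have -> : K * (1 + 1 / beta) * (D + beta * U) = K * ((1 + 1 / beta) * (D + beta * U)) by ring.
  by apply: ler_wpM2l.
apply: (le_trans _ s10).
have := mulr_ge0 (sqr_ge0 Cg) hcH; have := mulr_ge0 (mulr_ge0 (ler0n _ 4) (sqr_ge0 Cg)) w2.
nra.
Qed.
End S5.

Section Est.
Variables (R : realType) (n : nat).

Lemma arithC0 (p q U R2 dl : R) : 0 < dl -> 0 <= p -> 0 <= q -> p ^+ 2 <= U ->
  q ^+ 2 <= dl ^+ 2 * R2 -> p * q <= dl * (U + R2) / 2.
Proof.
move=> hdl p0 q0 hs ha.
have h := sqr_ge0 (dl * p - q).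
have h2 : 2 * dl * (p * q) <= dl ^+ 2 * U + dl ^+ 2 * R2.
  have : dl ^+ 2 * p ^+ 2 <= dl ^+ 2 * U by apply: ler_wpM2l => //; exact: sqr_ge0.
  nra.
have : dl * (2 * (p * q)) <= dl * (dl * (U + R2)) by nra.
rewrite ler_pM2l // => h3.
lra.
Qed.

Lemma arithC (s a U R2 dl : R) : 0 < dl -> s ^+ 2 <= U -> a ^+ 2 <= dl ^+ 2 * R2 ->
  `|s * a| <= dl * (U + R2) / 2.
Proof.
move=> hdl hs ha.
rewrite normrM.
apply: (@arithC0 `|s| `|a| U R2 dl hdl (normr_ge0 _) (normr_ge0 _)).
  by rewrite real_normK // num_real.
by rewrite real_normK // num_real.
Qed.

Lemma min_pos (f : 'I_n -> R) : (forall i, 0 < f i) -> exists m : R, 0 < m /\ m <= 1 /\ forall i, m <= f i.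
Proof.
move=> hf.
suff : forall s : seq 'I_n, exists m : R, 0 < m /\ m <= 1 /\ forall i, i \in s -> m <= f i.
  by case/(_ (enum 'I_n)) => m [h1 [h2 h3]]; exists m; split => //; split => // i; apply: h3; rewrite mem_enum.
elim => [|x s [m [h1 [h2 h3]]]]; first by exists 1; split => //; split.
exists (Num.min m (f x)); split; first by rewrite lt_min h1 hf.
split; first by rewrite ge_min h2.
move=> i; rewrite inE => /orP[/eqP->|hi]; first by rewrite ge_min lexx orbT.
by rewrite ge_min h3.
Qed.

End Est.

Section Est2.
Variables (R : realType) (n : nat).

Lemma sq_le_abs (x dl : R) : 0 <= dl -> x ^+ 2 <= dl ^+ 2 -> `|x| <= dl.
Proof.
move=> h0 h; rewrite -(ler_pXn2r (n:=2)) ?nnegrE //.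
by rewrite real_normK // num_real.
Qed.

Lemma amgm2 (p q : R) : p * q <= (p ^+ 2 + q ^+ 2) / 2.
Proof. have := sqr_ge0 (p - q); nra. Qed.

Lemma main_est (y z k : 'cV[R]_n) (beta m cH Cg dl D : R) :
  on_sphere y -> on_sphere z -> 0 < beta -> 0 < m -> m <= 1 ->
  (forall i, z i 0 != 0 -> m <= `|z i 0|) ->
  (forall i, z i 0 != 0 -> k i 0 = 0) ->
  0 <= cH -> 0 <= D -> D <= cH * sqnorm (y - z) ->
  0 < Cg -> sqnorm (y - z - k) <= Cg * (D + \sum_i (z i 0 != 0)%:R * (y i 0 - z i 0) ^+ 2) ->
  0 < dl -> sqnorm (y - z) <= dl ^+ 2 ->
  dl <= m -> dl <= 1 ->
  dl * (1 + Cg * (cH + 1)) <= 1 ->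
  dl * (1 / m + 3 / 2 + 3 * Cg / (2 * m ^+ 2)) <= 1 / 4 ->
  dl * (3 / 2 * beta * Cg) <= 1 / 4 ->
  let a := \sum_i (y i 0 - z i 0) * (y i 0 - z i 0 - k i 0) in
  let U := \sum_i (y i 0 ^+ 2 - z i 0 ^+ 2) ^+ 2 in
  let s := \sum_i z i 0 ^+ 2 * (y i 0 ^+ 2 - z i 0 ^+ 2) in
  let e := \sum_i ((y i 0 - z i 0) ^+ 2 * (y i 0 ^+ 2 - z i 0 ^+ 2)
                    - k i 0 * y i 0 * (y i 0 ^+ 2 - z i 0 ^+ 2)) in
  (D + beta * U) / 4 <= D * (1 - a / 2) + beta * U * (1 - a) + beta * e - beta * s * a /\
  sqnorm ((y - z) - (1/2) *: k) ^+ 2 <=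
     (4 * (1 / m ^+ 2) ^+ 2 + n%:R + 4 * Cg ^+ 2 * (1 / m ^+ 2) ^+ 2 + Cg ^+ 2 * cH)
       * (1 + 1 / beta) * (D + beta * U).
Proof.
move=> sy sz hb hm hm1 hmz hkz hcH hD hDc hC hR2 hdl hSd hdlm hdl1 hk0 hk1 hk2 a U s e.
set Sd := sqnorm (y - z).
set R2 := sqnorm (y - z - k).
have dE : forall i, (y - z) i 0 = y i 0 - z i 0 by move=> i; rewrite !mxE.
have rE : forall i, (y - z - k) i 0 = y i 0 - z i 0 - k i 0 by move=> i; rewrite !mxE.
have SdE : Sd = \sum_i (y i 0 - z i 0) ^+ 2 by apply: eq_bigr => i _; rewrite dE.
have R2E : R2 = \sum_i (y i 0 - z i 0 - k i 0) ^+ 2 by apply: eq_bigr => i _; rewrite rE.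
have hdi : forall i, (y i 0 - z i 0) ^+ 2 <= dl ^+ 2.
  by move=> i; rewrite -dE; apply: le_trans (coord_le_sqnorm _ i) hSd.
have hyi : forall i, y i 0 ^+ 2 <= 1 by move=> i; rewrite -sy; exact: coord_le_sqnorm.
have hzi : forall i, z i 0 ^+ 2 <= 1 by move=> i; rewrite -sz; exact: coord_le_sqnorm.
have hdl0 : 0 <= dl by exact: ltW.
have hm0 : 0 <= m by exact: ltW.
have hind : forall i, z i 0 != 0 -> m ^+ 2 * (y i 0 - z i 0) ^+ 2 <= (y i 0 ^+ 2 - z i 0 ^+ 2) ^+ 2.
  move=> i hi; apply: ind_le => //.
    have := hmz i hi => h; rewrite -(real_normK (num_real (z i 0))).
    by rewrite lerXn2r // nnegrE.
  apply: le_trans (hdi i) _; rewrite lerXn2r // nnegrE //.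
have hw : 0 < 1 / m ^+ 2 by rewrite divr_gt0 // exprn_gt0.
have pc : forall i, (z i 0 != 0)%:R * (y i 0 - z i 0) ^+ 2 <= (y i 0 ^+ 2 - z i 0 ^+ 2) ^+ 2 * (1 / m ^+ 2).
  move=> i; have [hi|hi] := boolP (z i 0 != 0).
    rewrite mul1r mul1r ler_pdivlMr ?exprn_gt0 // mulrC; exact: hind.
  rewrite mul0r; apply: mulr_ge0; [exact: sqr_ge0 | exact: ltW].
have pP2 : forall i, (y i 0 - z i 0) ^+ 2 <= (y i 0 ^+ 2 - z i 0 ^+ 2) ^+ 2 * (1 / m ^+ 2) + `|y i 0 ^+ 2 - z i 0 ^+ 2|.
  move=> i; have [hi|hi] := boolP (z i 0 != 0).
    have h := pc i; rewrite hi (_ : true%:R = 1) // mul1r in h; apply: le_trans h _; rewrite lerDl; exact: normr_ge0.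
  move: hi; rewrite negbK => /eqP ->.
  rewrite !expr0n /= !subr0; apply: le_trans (ler_norm _) _; rewrite lerDr.
  apply: mulr_ge0; [exact: sqr_ge0 | exact: ltW].
have pu : forall i, (y i 0 ^+ 2 - z i 0 ^+ 2) ^+ 2 <= 4 * (y i 0 - z i 0) ^+ 2.
  by move=> i; apply: u_le.
have pe : forall i, `|(y i 0 - z i 0) ^+ 2 * (y i 0 ^+ 2 - z i 0 ^+ 2) - k i 0 * y i 0 * (y i 0 ^+ 2 - z i 0 ^+ 2)| <=
     dl * ((y i 0 ^+ 2 - z i 0 ^+ 2) ^+ 2 / m + (y i 0 ^+ 2 - z i 0 ^+ 2) ^+ 2 + (y i 0 - z i 0 - k i 0) ^+ 2).
  move=> i; apply: e_bound => //.
    by apply: sq_le_abs.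
  by move=> hi; split; [exact: hkz | exact: hind].
have U0 : 0 <= U by apply: sumr_ge0 => i _; exact: sqr_ge0.
have Sd0 : 0 <= Sd by exact: sqnorm_ge0.
have R20 : 0 <= R2 by exact: sqnorm_ge0.
have hU4 : U <= 4 * Sd.
  rewrite SdE mulr_sumr; apply: ler_sum => i _; exact: pu.
have hU4' : U <= 4.
  apply: le_trans hU4 _.
  have : Sd <= 1 by apply: le_trans hSd _; rewrite expr_le1 // ?ltW.
  lra.
have hind_sum : \sum_i (z i 0 != 0)%:R * (y i 0 - z i 0) ^+ 2 <= U * (1 / m ^+ 2).
  rewrite /U mulr_suml; apply: ler_sum => i _; exact: pc.
have hind_sd : \sum_i (z i 0 != 0)%:R * (y i 0 - z i 0) ^+ 2 <= Sd.
  rewrite SdE; apply: ler_sum => i _.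
  have [hi|hi] := boolP (z i 0 != 0); first by rewrite mul1r.
  by rewrite mul0r sqr_ge0.
have hR2w : R2 <= Cg * (D + U * (1 / m ^+ 2)).
  apply: le_trans hR2 _; apply: ler_wpM2l; first exact: ltW.
  by rewrite lerD2l.
have he : `|e| <= dl * (U / m + U + R2).
  apply: le_trans (ler_norm_sum _ _ _) _.
  apply: le_trans (ler_sum _ (fun i _ => pe i)) _.
  rewrite -mulr_sumr; apply: ler_wpM2l => //.
  rewrite R2E /U !big_split /= -mulr_suml.
  done.
have ha_abs : `|a| <= (Sd + R2) / 2.
  apply: le_trans (ler_norm_sum _ _ _) _.
  rewrite SdE R2E -big_split /= mulr_suml; apply: ler_sum => i _.
  rewrite normrM; apply: le_trans (amgm2 _ _) _.
  by rewrite !real_normK ?num_real.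
have Sd1 : Sd <= 1 by apply: le_trans hSd _; rewrite expr_le1 // ?ltW.
have hR2sd : R2 <= Cg * ((cH + 1) * Sd).
  apply: le_trans hR2 _; apply: ler_wpM2l; first exact: ltW.
  move: hind_sd hDc; rewrite -/Sd; lra.
have ha12 : `|a| <= 1 / 2.
  apply: le_trans ha_abs _.
  have hX : 0 <= 1 + Cg * (cH + 1) by apply: addr_ge0 => //; apply: mulr_ge0; [exact: ltW | lra].
  have h1 : Sd * (1 + Cg * (cH + 1)) <= dl ^+ 2 * (1 + Cg * (cH + 1)) by apply: ler_wpM2r.
  have h2 : dl ^+ 2 * (1 + Cg * (cH + 1)) <= dl * (1 + Cg * (cH + 1)).
    apply: ler_wpM2r => //; rewrite expr2; have := mulr_ge0 hdl0 hdl0; nra.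
  have h3 : R2 <= Sd * (Cg * (cH + 1)).
    have -> : Sd * (Cg * (cH + 1)) = Cg * ((cH + 1) * Sd) by ring.
    exact: hR2sd.
  nra.
have haSd : a ^+ 2 <= Sd * R2.
  have := cauchy_schwarz (y - z) (y - z - k).
  have -> : dot (y - z) (y - z - k) = a by apply: eq_bigr => i _; rewrite dE rE.
  by [].
have ha2 : a ^+ 2 <= dl ^+ 2 * R2 by apply: le_trans haSd _; apply: ler_wpM2r.
have hs2 : s ^+ 2 <= U.
  set v := \col_i (z i 0 * (y i 0 ^+ 2 - z i 0 ^+ 2)).
  have := cauchy_schwarz z v.
  have -> : dot z v = s by apply: eq_bigr => i _; rewrite mxE; ring.
  move: sz; rewrite /on_sphere => ->; rewrite mul1r => h; apply: le_trans h _.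
  apply: ler_sum => i _; rewrite mxE exprMn.
  apply: ler_piMl; [exact: sqr_ge0 | exact: hzi].
have hsa : `|s * a| <= dl * (U + R2) / 2 by apply: arithC.
split.
  apply: (@arithA _ D U R2 a s e beta dl Cg m) => //.
  by move: hR2w; rewrite mul1r.
set X := sqnorm (y - z - (1 / 2) *: k).
set SA := \sum_i `|y i 0 ^+ 2 - z i 0 ^+ 2|.
apply: (@arithB _ D U R2 Sd X SA beta (1 / m ^+ 2) cH Cg n%:R) => //.
- exact: sqnorm_ge0.
- exact: sumr_ge0.
- rewrite /X SdE R2E -big_split /= mulr_suml; apply: ler_sum => i _.
  rewrite !mxE; have := sqr_ge0 (k i 0); have := sqr_ge0 (y i 0 - z i 0 - k i 0 / 2).
  move=> h1 h2. 
  have -> : (y i 0 - z i 0 - 1 / 2 * k i 0) ^+ 2 = ((y i 0 - z i 0) + (y i 0 - z i 0 - k i 0)) ^+ 2 / 4 by field.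
  have := sqr_ge0 (k i 0); have := amgm2 (y i 0 - z i 0) (y i 0 - z i 0 - k i 0); nra.
- rewrite SdE /U mulr_suml -big_split /=; apply: ler_sum => i _; exact: pP2.
- set v := \col_i `|y i 0 ^+ 2 - z i 0 ^+ 2|.
  have := cauchy_schwarz v (const_mx 1).
  have -> : dot v (const_mx 1) = SA by apply: eq_bigr => i _; rewrite !mxE mulr1.
  have -> : sqnorm (const_mx 1 : 'cV[R]_n) = n%:R.
    by rewrite /sqnorm (eq_bigr (fun _ => 1)) ?sumr_const ?card_ord // => i _; rewrite mxE expr1n.
  have -> : sqnorm v = U by apply: eq_bigr => i _; rewrite mxE real_normK // num_real.
  by rewrite mulrC.
- by apply: le_trans hDc _; apply: ler_piMr.
Qed.


End Est2.

Section Fin.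
Variable R : realType.

Lemma arithD (M X SG xg K3 : R) : 0 <= M -> M / 4 <= xg -> xg ^+ 2 <= X * SG ->
  X ^+ 2 <= K3 * M -> 0 <= X -> 0 <= SG -> 0 <= K3 ->
  (M / 2) ^+ 3 <= 32 * K3 * SG ^+ 2.
Proof.
move=> hM h1 h2 h3 hX hS hK.
have h4 : (M / 4) ^+ 2 <= X * SG.
  apply: le_trans h2; rewrite lerXn2r // nnegrE; lra.
have h5 : ((M / 4) ^+ 2) ^+ 2 <= (X * SG) ^+ 2.
  rewrite lerXn2r // nnegrE; [exact: sqr_ge0| exact: mulr_ge0].
have h6 : (X * SG) ^+ 2 <= K3 * M * SG ^+ 2 by rewrite exprMn; apply: ler_wpM2r => //; exact: sqr_ge0.
have [M0|Mpos] := eqVneq M 0.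
  rewrite M0 mul0r expr0n /=; apply: mulr_ge0; [apply: mulr_ge0 => //; lra | exact: sqr_ge0].
have Mgt : 0 < M by rewrite lt_def Mpos hM.
have h7 : M * (M ^+ 3 / 256) <= M * (K3 * SG ^+ 2).
  have -> : M * (M ^+ 3 / 256) = ((M / 4) ^+ 2) ^+ 2 by field.
  have -> : M * (K3 * SG ^+ 2) = K3 * M * SG ^+ 2 by ring.
  exact: le_trans h5 h6.
rewrite ler_pM2l // in h7.
have -> : (M / 2) ^+ 3 = 32 * (M ^+ 3 / 256) by field.
rewrite -mulrA; apply: ler_wpM2l => //; lra.
Qed.

Lemma powR_final (E N c : R) : 0 <= E -> 0 <= N -> 0 <= c -> E ^+ 3 <= c * N ^+ 4 ->
  powR E (3 / 4) <= (c + 1) * N.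
Proof.
move=> hE hN hc h.
have hc1 : 1 <= c + 1 by lra.
have h1 : c * N ^+ 4 <= ((c + 1) * N) ^+ 4.
  rewrite exprMn; apply: ler_wpM2r; first exact: exprn_ge0.
  apply: le_trans (_ : c + 1 <= _); first lra.
  have : 1 <= (c + 1) ^+ 3 by rewrite exprn_ege1.
  rewrite exprSr; have := mulr_ge0 (ler0n _ 0) hN; nra.
have h2 : E ^+ 3 <= ((c + 1) * N) ^+ 4 by apply: le_trans h h1.
have hx : 0 <= (c + 1) * N by apply: mulr_ge0 => //; lra.
have e1 : powR E (3 / 4) = powR (E ^+ 3) (4 ^-1).
  by rewrite -powR_mulrn // -powRrM.
have e2 : (c + 1) * N = powR (((c + 1) * N) ^+ 4) (4 ^-1).
  by rewrite -powR_mulrn // -powRrM mulfV ?powRr1 // pnatr_eq0.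
suff hs : powR (E ^+ 3) (4 ^-1) <= powR (((c + 1) * N) ^+ 4) (4 ^-1).
  by rewrite -e2 -e1 in hs.
apply: ge0_ler_powR => //; rewrite ?nnegrE //. all: try exact: exprn_ge0. by rewrite invr_ge0.
Qed.

End Fin.

Unset Implicit Arguments.

Theorem theorem16 (R : realType) (n : nat) (A : 'M[R]_n) (beta lam : R)
  (z : 'cV[R]_n) :
  A^T = A -> 0 < beta ->
  on_sphere z ->
  2 * lam = qform A z + 2 * beta * norm4_4 z ->
  (A + (2 * beta) *: diagsq z) *m z = (2 * lam) *: z ->
  psd (A + (2 * beta) *: diagsq z - (2 * lam)%:M) ->
  exists delta eta : R, 0 < delta /\ 0 < eta /\
    forall y : 'cV[R]_n, on_sphere y -> norm2 (y - z) < delta ->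
      powR `|fobj A beta y - fobj A beta z| (3 / 4) <= eta * norm2 (rgrad A beta y).
Proof.
move=> sA hb sz _ hstat hpsd.
set H := A + (2 * beta) *: diagsq z - (2 * lam)%:M.
have hHdef : H = A + (2 * beta) *: diagsq z - (2 * lam)%:M by [].
have hHz : H *m z = 0 by rewrite /H mulmxBl hstat mul_scalar_mx subrr.
have sH : H^T = H.
  by rewrite /H linearB linearD linearZ /= sA /diagsq tr_diag_mx tr_scalar_mx.
have pH : forall v, 0 <= dot v (H *m v) by move=> v; rewrite -qformE; exact: hpsd.
set ind := \row_i ((z i 0 != 0)%:R : R).
set Q := H + diag_mx ind.
have sQ : Q^T = Q by rewrite /Q linearD /= sH tr_diag_mx.
have QE : forall v, dot v (Q *m v) = dot v (H *m v) + \sum_i (z i 0 != 0)%:R * v i 0 ^+ 2.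
  move=> v; rewrite /Q mulmxDl dotDr dot_diag; congr (_ + _).
  by apply: eq_bigr => i _; rewrite mxE; ring.
have pQ : forall v, 0 <= dot v (Q *m v).
  move=> v; rewrite QE; apply: addr_ge0; first exact: pH.
  by apply: sumr_ge0 => i _; apply: mulr_ge0; [exact: ler0n | exact: sqr_ge0].
have [Cg [hCg hgap]] := gap sQ pQ.
have hfpos : forall i, 0 < (if z i 0 == 0 then 1 else `|z i 0|).
  by move=> i; case: eqP => [_|/eqP h]; [exact: ltr01 | rewrite normr_gt0].
have [m [hm [hm1 hmf]]] := @min_pos R n (fun i => if z i 0 == 0 then 1 else `|z i 0|) hfpos.
have hmz : forall i, z i 0 != 0 -> m <= `|z i 0|.
  by move=> i hi; have := hmf i; rewrite (negbTE hi).
have [cH [hcH hHb]] := quad_bound H.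
set K1 := 1 / m + 3 / 2 + 3 * Cg / (2 * m ^+ 2).
set K2 := 3 / 2 * beta * Cg.
set T := 1 + 1 / m + (1 + Cg * (cH + 1)) + 4 * K1 + 4 * K2.
have hm0 : 0 <= m by exact: ltW.
have hCg0 : 0 <= Cg by exact: ltW.
have hb0 : 0 <= beta by exact: ltW.
have im0 : 0 <= 1 / m by rewrite divr_ge0.
have K10 : 0 <= K1.
  rewrite /K1; apply: addr_ge0; first by apply: addr_ge0 => //; lra.
  by apply: divr_ge0; apply: mulr_ge0 => //; exact: exprn_ge0.
have K20 : 0 <= K2 by rewrite /K2; apply: mulr_ge0 => //; apply: mulr_ge0 => //; lra.
have C0 : 0 <= 1 + Cg * (cH + 1) by apply: addr_ge0 => //; apply: mulr_ge0 => //; apply: addr_ge0.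
have T1 : 1 <= T.
  rewrite /T; have := mulr_ge0 (ler0n R 4) K10; have := mulr_ge0 (ler0n R 4) K20; lra.
have T0 : 0 < T by lra.
set dl := 1 / T.
have dl0 : 0 < dl by rewrite divr_gt0.
have dlT : forall X, 0 <= X -> X <= T -> dl * X <= 1.
  by move=> X hX hXT; rewrite /dl mul1r ler_pdivrMl // mulr1.
have hdl1 : dl <= 1 by rewrite -[dl]mulr1; apply: dlT => //; lra.
have hdlm : dl <= m.
  have : dl * (1 / m) <= 1 by apply: dlT => //; rewrite /T; have := mulr_ge0 (ler0n R 4) K10; have := mulr_ge0 (ler0n R 4) K20; lra.
  by rewrite mul1r ler_pdivrMr // mul1r.
have hk0 : dl * (1 + Cg * (cH + 1)) <= 1.
  by apply: dlT => //; rewrite /T; have := mulr_ge0 (ler0n R 4) K10; have := mulr_ge0 (ler0n R 4) K20; lra.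
have hk1 : dl * K1 <= 1 / 4.
  have : dl * (4 * K1) <= 1 by apply: dlT; [exact: mulr_ge0 | rewrite /T; have := mulr_ge0 (ler0n R 4) K20; lra].
  lra.
have hk2 : dl * K2 <= 1 / 4.
  have : dl * (4 * K2) <= 1 by apply: dlT; [exact: mulr_ge0 | rewrite /T; have := mulr_ge0 (ler0n R 4) K10; lra].
  lra.
set w := 1 / m ^+ 2.
set K3 := (4 * w ^+ 2 + n%:R + 4 * Cg ^+ 2 * w ^+ 2 + Cg ^+ 2 * cH) * (1 + 1 / beta).
have w0 : 0 <= w by rewrite /w divr_ge0 // exprn_ge0.
have K30 : 0 <= K3.
  rewrite /K3; apply: mulr_ge0.
    apply: addr_ge0; last by apply: mulr_ge0 => //; exact: sqr_ge0.
    apply: addr_ge0; last by apply: mulr_ge0; [apply: mulr_ge0 => //; exact: sqr_ge0 | exact: sqr_ge0].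
    by apply: addr_ge0 => //; apply: mulr_ge0 => //; exact: sqr_ge0.
  by apply: addr_ge0 => //; rewrite divr_ge0.
exists dl, (32 * K3 + 1); split => //; split; first by have := mulr_ge0 (ler0n R 32) K30; lra.
move=> y sy hyd.
have hSd : sqnorm (y - z) <= dl ^+ 2.
  have h := ltW hyd; rewrite /norm2 in h.
  rewrite -(sqr_sqrtr (sqnorm_ge0 (y - z))) ler_pXn2r // nnegrE ?sqrtr_ge0 //; exact: ltW.
have [k [hQk hkQ]] := hgap (y - z).
have hkk : dot k (Q *m k) = 0 by rewrite hQk dot0r.
have hkz : forall i, z i 0 != 0 -> k i 0 = 0.
  move=> i hi.
  have hs0 : \sum_i (z i 0 != 0)%:R * k i 0 ^+ 2 = 0.
    apply/eqP; rewrite eq_le; apply/andP; split; last first.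
      by apply: sumr_ge0 => j _; apply: mulr_ge0; [exact: ler0n | exact: sqr_ge0].
    move: hkk; rewrite QE => hkk; have := pH k; lra.
  have := @psumr_eq0P _ _ xpredT (fun j => (z j 0 != 0)%:R * k j 0 ^+ 2)
    (fun j _ => mulr_ge0 (ler0n _ _) (sqr_ge0 _)) hs0 i isT.
  by rewrite hi mul1r => /eqP; rewrite sqrf_eq0 => /eqP.
have hHk : H *m k = 0.
  have hdk : diag_mx ind *m k = 0.
    apply/matrixP => i j; rewrite mul_diag_mx !mxE (ord1 j).
    by have [hi|hi] := boolP (z i 0 != 0); [rewrite hkz // mulr0 | rewrite mul0r].
  by move: hQk; rewrite /Q mulmxDl hdk addr0.
set D := dot (y - z) (H *m (y - z)).
have hD0 : 0 <= D by exact: pH.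
have hDc : D <= cH * sqnorm (y - z) by apply: le_trans (ler_norm _) _; exact: hHb.
have hR2 : sqnorm (y - z - k) <= Cg * (D + \sum_i (z i 0 != 0)%:R * (y i 0 - z i 0) ^+ 2).
  apply: le_trans hkQ _; rewrite QE -/D; apply: ler_wpM2l => //.
  by rewrite lerD2l; apply: ler_sum => i _; rewrite !mxE.
have [hV hX] := main_est sy sz hb hm hm1 hmz hkz hcH hD0 hDc hCg hR2 dl0 hSd hdlm hdl1 hk0 hk1 hk2.
have hkey := key_ident beta sH hHz hHk hkz sy sz.
have hrg := rgrad_eq hHdef hHz sy.
have hfd := fobj_diff hHdef sH hHz sy sz.
set U := \sum_i (y i 0 ^+ 2 - z i 0 ^+ 2) ^+ 2.
set x := y - z - (1 / 2) *: k.
set G := rgrad A beta y.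
set V := D * (1 - (\sum_i (y i 0 - z i 0) * (y i 0 - z i 0 - k i 0)) / 2) +
    beta * U * (1 - \sum_i (y i 0 - z i 0) * (y i 0 - z i 0 - k i 0)) +
    beta * \sum_i ((y i 0 - z i 0) ^+ 2 * (y i 0 ^+ 2 - z i 0 ^+ 2) -
        k i 0 * y i 0 * (y i 0 ^+ 2 - z i 0 ^+ 2)) -
    beta * (\sum_i z i 0 ^+ 2 * (y i 0 ^+ 2 - z i 0 ^+ 2)) *
    \sum_i (y i 0 - z i 0) * (y i 0 - z i 0 - k i 0).
have hxG : dot x G = V by rewrite /G hrg; exact: hkey.
have hU0 : 0 <= U by apply: sumr_ge0 => i _; exact: sqr_ge0.
have hM0 : 0 <= D + beta * U by apply: addr_ge0 => //; exact: mulr_ge0.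
have hcs := cauchy_schwarz x G.
have h3 := @arithD R (D + beta * U) (sqnorm x) (sqnorm G) (dot x G) K3 hM0
   (ltac:(rewrite hxG; exact: hV)) hcs hX (sqnorm_ge0 _) (sqnorm_ge0 _) K30.
have hE : `|fobj A beta y - fobj A beta z| = (D + beta * U) / 2.
  rewrite hfd -/D -/U ger0_norm; first by field.
  by apply: addr_ge0; [exact: divr_ge0 | apply: mulr_ge0 => //; exact: divr_ge0].
rewrite hE.
apply: powR_final.
- exact: divr_ge0.
- exact: sqrtr_ge0.
- exact: mulr_ge0.
have -> : norm2 G ^+ 4 = sqnorm G ^+ 2.
  by rewrite (_ : 4 = 2 * 2)%N // exprM /norm2 sqr_sqrtr // sqnorm_ge0.
exact: h3.
Qed.
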